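(* Let $G$ be a finite simple connected graph and $\sigma$ a confined position on $G$, with complement $\sigma_c$ defined by $\sigma_c(v)=2\deg(v)-1-\sigma(v)$. Then $p(\sigma_c)=p(\sigma)$.
   Context: Parallel chip-firing game: on a finite simple connected graph $G$, a position $\sigma$ assigns a nonnegative integer $\sigma(v)$ to each vertex. Writing $\Phi_\sigma(v)$ for the number of neighbors $w$ of $v$ with $\sigma(w)\ge\deg(w)$, the step operator is $U\sigma(v)=\sigma(v)+\Phi_\sigma(v)$ if $\sigma(v)\le \deg(v)-1$ and $U\sigma(v)=\sigma(v)+\Phi_\sigma(v)-\deg(v)$ otherwise. A position is confined if every vertex satisfies $\Phi_\sigma(v)\le\sigma(v)\le\Phi_\sigma(v)+\deg(v)-1$. The period $p(\sigma)$ is the least positive integer $p$ with $U^{t+p}\sigma=U^t\sigma$ for all sufficiently large $t$. *)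

(* Defs.v *)
From mathcomp Require Import all_boot.
Set Implicit Arguments. Unset Strict Implicit. Unset Printing Implicit Defensive.

Definition simple_graph (T : finType) (e : rel T) : Prop :=
  symmetric e /\ irreflexive e.

Definition connected_graph (T : finType) (e : rel T) : Prop :=
  forall x y : T, connect e x y.

Definition deg (T : finType) (e : rel T) (v : T) : nat := #|[pred w | e v w]|.

Definition position (T : finType) := {ffun T -> nat}.

Definition Phi (T : finType) (e : rel T) (s : position T) (v : T) : nat :=
  #|[pred w | e v w && (deg e w <= s w)]|.

(* Step operator. sigma(v) <= deg(v) - 1 is written sigma(v) < deg(v)
   (equivalent over the integers). *)
Definition U (T : finType) (e : rel T) (s : position T) : position T :=
  [ffun v => if s v < deg e v then s v + Phi e s v
             else s v + Phi e s v - deg e v].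

(* Confined: Phi(v) <= sigma(v) <= Phi(v) + deg(v) - 1 (integer reading). *)
Definition confined (T : finType) (e : rel T) (s : position T) : Prop :=
  forall v, Phi e s v <= s v /\ s v < Phi e s v + deg e v.

Definition complement (T : finType) (e : rel T) (s : position T) : position T :=
  [ffun v => (deg e v).*2 - 1 - s v].

Definition eventually_periodic (T : finType) (e : rel T) (s : position T) (p : nat) : Prop :=
  exists t0, forall t, t0 <= t -> iter (t + p) (U e) s = iter t (U e) s.

Definition is_period (T : finType) (e : rel T) (s : position T) (p : nat) : Prop :=
  0 < p /\ eventually_periodic e s p /\
  forall q, 0 < q -> eventually_periodic e s q -> p <= q.

(* Main.v *)
Require Import Defs.
From mathcomp Require Import all_boot.
From Stdlib Require Import Lia.
Set Implicit Arguments. Unset Strict Implicit.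

Definition bnd (T : finType) (e : rel T) (s : position T) : Prop :=
  forall v, s v < (deg e v).*2.

Lemma Phi_le (T : finType) (e : rel T) s v : Phi e s v <= deg e v.
Proof. by apply: subset_leq_card; apply/subsetP => w /andP[]. Qed.

Lemma Phi_c (T : finType) (e : rel T) s : bnd e s ->
  forall v, Phi e (complement e s) v = deg e v - Phi e s v.
Proof.
move=> hb v; rewrite /Phi.
have -> : deg e v = _ := esym (cardID [pred w | deg e w <= s w] [pred w | e v w]).
rewrite addKn; apply: eq_card => w /=; rewrite !inE /= ffunE.
case: (e v w); last by rewrite andbF. rewrite andbT; have := hb w; rewrite -addnn.
move: (s w) (deg e w) => a b /ltP h.
apply/idP/idP.
- move/leP=> h1; apply/negP => /leP h2. rewrite -?minusE -?plusE in h h1 h2; lia.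
- move/negP => h1; apply/leP; rewrite -?minusE -?plusE in h h1 |- *.
  have : ~ (b <= a)%coq_nat by move=> /leP h3; apply: h1.
  lia.
Qed.

Lemma U_bnd (T : finType) (e : rel T) s : bnd e s -> bnd e (U e s).
Proof.
move=> hb v; rewrite /U ffunE; have := hb v; have := Phi_le e s v.
rewrite -addnn; move: (s v) (deg e v) (Phi e s v) => a b c /leP h1 /ltP h2.
case: ifP => /ltP h3; apply/ltP; rewrite -?minusE -?plusE in h1 h2 h3 |- *; lia.
Qed.

Lemma c_bnd (T : finType) (e : rel T) s : bnd e s -> bnd e (complement e s).
Proof.
move=> hb v; rewrite /complement ffunE; have := hb v.
rewrite -addnn; move: (s v) (deg e v) => a b /ltP h2.
apply/ltP; rewrite -?minusE -?plusE in h2 |- *; lia.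
Qed.

Lemma U_c (T : finType) (e : rel T) s : bnd e s ->
  U e (complement e s) = complement e (U e s).
Proof.
move=> hb; apply/ffunP => v; rewrite /U /complement !ffunE -/(complement e s) Phi_c //.
have := hb v; have := Phi_le e s v.
rewrite -addnn; move: (s v) (deg e v) (Phi e s v) => a b c /leP h1 /ltP h2.
case: ifP => /ltP h3; case: ifP => /ltP h4;
  rewrite -?minusE -?plusE in h1 h2 h3 h4 |- *; lia.
Qed.

Lemma iter_bnd (T : finType) (e : rel T) s : bnd e s -> forall t, bnd e (iter t (U e) s).
Proof. by move=> hb; elim=> //= t IH; apply: U_bnd. Qed.

Lemma iter_c (T : finType) (e : rel T) s : bnd e s -> forall t,
  iter t (U e) (complement e s) = complement e (iter t (U e) s).
Proof.
move=> hb; elim=> //= t IH; rewrite IH U_c //; exact: iter_bnd.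
Qed.

Lemma cc (T : finType) (e : rel T) s : bnd e s -> complement e (complement e s) = s.
Proof.
move=> hb; apply/ffunP => v; rewrite /complement !ffunE; have := hb v.
rewrite -addnn; move: (s v) (deg e v) => a b /ltP h2.
rewrite -?minusE -?plusE in h2 |- *; lia.
Qed.

Lemma ep_c (T : finType) (e : rel T) s : bnd e s -> forall q,
  eventually_periodic e (complement e s) q <-> eventually_periodic e s q.
Proof.
move=> hb q; rewrite /eventually_periodic; split => -[t0 H]; exists t0 => t /H.
- rewrite !iter_c // => E.
  by rewrite -(cc (iter_bnd hb (t + q))) E cc //; apply: iter_bnd.
- by rewrite !iter_c // => ->.
Qed.

Theorem corollary2p4 (T : finType) (e : rel T) (s : position T) :
  simple_graph e -> connected_graph e -> confined e s ->
  forall p : nat, is_period e (complement e s) p <-> is_period e s p.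
Proof.
move=> _ _ hc p.
have hb : bnd e s.
  move=> v; have [_ h] := hc v; apply: (leq_trans h).
  by rewrite -addnn leq_add2r Phi_le.
rewrite /is_period ep_c //; split=> -[h1 [h2 h3]]; do !split => //.
- by move=> q hq /(ep_c hb q); apply: h3.
- by move=> q hq /(ep_c hb q); apply: h3.
Qed.
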